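(* Let $q$ be a prime power, $n\ge 1$, and $1\le k\le n(q-1)$. Then $C_{n,k}^q$ is self-orthogonal (i.e. $C_{n,k}^q\subseteq (C_{n,k}^q)^\perp$) if and only if $1\le k\le \frac{n(q-1)}{2}$ and $2k\equiv 0\pmod{q-1}$. In particular, in that case $\operatorname{Hull}(C_{n,k}^q)=C_{n,k}^q$.
   Context: For a prime power $q$ and integers $n\ge 1$, $k\ge 0$, the projective Reed-Muller code $C_{n,k}^q\subseteq \mathbb{F}_q^N$, $N=\frac{q^{n+1}-1}{q-1}$, is defined as follows. For each point of $\mathbb{P}^n(\mathbb{F}_q)$ choose the affine representative $(p_0,\dots,p_n)\in\mathbb{F}_q^{n+1}\setminus\{0\}$ whose left-most nonzero coordinate equals $1$, and fix an ordering $P_1',\dots,P_N'$ of these representatives. Then $C_{n,k}^q=\{(F(P_1'),\dots,F(P_N')) : F\in \mathbb{F}_q[x_0,\dots,x_n]_k\}$, where $\mathbb{F}_q[x_0,\dots,x_n]_k$ is the space of homogeneous polynomials of degree $k$ together with $0$. Duals are taken with respect to the standard dot product on $\mathbb{F}_q^N$, and $\operatorname{Hull}(C)=C\cap C^\perp$. *)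

(* Defs.v *)
From HB Require Import structures.
From mathcomp Require Import all_boot all_order all_algebra all_field.
From mathcomp Require Import mpoly.
Set Implicit Arguments. Unset Strict Implicit. Unset Printing Implicit Defensive.
Import GRing.Theory.
Local Open Scope ring_scope.

Section ProjRM.
Variable F : finFieldType.

(* v is the normalized affine representative of a point of P^n(F):
   its left-most nonzero coordinate equals 1. *)
Definition normalized (n : nat) (v : 'I_n.+1 -> F) : bool :=
  [exists i : 'I_n.+1, (v i == 1) && [forall j : 'I_n.+1, (j < i)%N ==> (v j == 0)]].

Definition PPoint (n : nat) := {v : {ffun 'I_n.+1 -> F} | normalized v}.

Definition Nlen (n : nat) : nat := #|{: PPoint n}|.

Definition pt (n : nat) (i : 'I_(Nlen n)) : 'I_n.+1 -> F :=
  val (@enum_val (PPoint n) (mem predT) i).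

Definition evalvec (n : nat) (p : {mpoly F[n.+1]}) : 'rV[F]_(Nlen n) :=
  \row_(i < Nlen n) p.@[pt i].

(* The projective Reed-Muller code C_{n,k}^q (as a subset of F^N);
   homogeneous polynomials of degree k together with 0 (0 is k.-homog). *)
Definition PRM (n k : nat) : 'rV[F]_(Nlen n) -> Prop :=
  fun w => exists p : {mpoly F[n.+1]}, p \is k.-homog /\ w = evalvec p.

Definition dotp (N : nat) (u v : 'rV[F]_N) : F := \sum_(i < N) u 0 i * v 0 i.

Definition dual_code (N : nat) (C : 'rV[F]_N -> Prop) : 'rV[F]_N -> Prop :=
  fun w => forall c, C c -> dotp c w = 0.

Definition hull (N : nat) (C : 'rV[F]_N -> Prop) : 'rV[F]_N -> Prop :=
  fun w => C w /\ dual_code C w.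

Definition self_orthogonal (N : nat) (C : 'rV[F]_N -> Prop) : Prop :=
  forall w, C w -> dual_code C w.

End ProjRM.

(* Main.v *)
Require Import Defs.
From HB Require Import structures.
From mathcomp Require Import all_boot all_order all_algebra all_fingroup all_field all_solvable.
From mathcomp Require Import mpoly.
From mathcomp Require Import zify.
Set Implicit Arguments. Unset Strict Implicit. Unset Printing Implicit Defensive.
Import GRing.Theory.
Local Open Scope ring_scope.

Section FF.
Variable F : finFieldType.

Lemma natr_cardF : (#|F|%:R : F) = 0.
Proof.
have := @expg_cardG _ (setT_group F) (GRing.one F) (in_setT _).
rewrite FinRing.zmodXgE cardsT. by [].
Qed.

Lemma cardF_gt1 : (1 < #|F|)%N.
Proof. exact: finNzRing_gt1. Qed.

Lemma natr_cardF1 : ((#|F|.-1)%:R : F) = -1.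
Proof.
apply/eqP; rewrite -subr_eq0 opprK natr1 prednK ?natr_cardF //.
by have := cardF_gt1; lia.
Qed.

Lemma unit_pow (x : F) : x != 0 -> x ^+ #|F|.-1 = 1.
Proof.
move=> x0; apply: (mulIf x0); rewrite mul1r -exprSr prednK; first exact: expf_card.
by have := cardF_gt1; lia.
Qed.

Lemma prim_exists : exists z : F, (#|F|.-1).-primitive_root z.
Proof.
pose rs := [seq x <- enum F | x != 0].
have gt0 : (0 < #|F|.-1)%N by have := cardF_gt1; lia.
have := @has_prim_root F #|F|.-1 rs gt0.
have H1 : all (#|F|.-1).-unity_root rs.
  apply/allP => x; rewrite mem_filter => /andP[x0 _].
  by rewrite unity_rootE unit_pow.
have H2 : uniq rs by rewrite filter_uniq // enum_uniq.
have H3 : (#|F|.-1 <= size rs)%N.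
  rewrite size_filter -(cardC1 (0:F)) cardE /enum_mem -size_filter -filter_predI.
  apply/eq_leq; apply: congr1; apply: eq_filter => y /=; by rewrite andbT.
move/(_ H1 H2 H3)/hasP => [z _ pz]; by exists z.
Qed.

Lemma psum (m : nat) : \sum_(x : F) x ^+ m =
  if (0 < m)%N && (#|F|.-1 %| m)%N then -1 else 0.
Proof.
case: m => [|m].
  under eq_bigr do rewrite expr0.
  rewrite sumr_const /=; exact: natr_cardF.
case: (boolP (#|F|.-1 %| m.+1)%N) => dv /=.
  rewrite (bigD1 0) //= expr0n /= add0r.
  under eq_bigr => x x0 do rewrite -(divnK dv) mulnC exprM unit_pow // expr1n.
  by rewrite sumr_const cardC1 natr_cardF1.
have [z pz] := prim_exists.
have z0 : z != 0 by rewrite (prim_root_eq0 pz); have := cardF_gt1; lia.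
have zm : z ^+ m.+1 != 1 by rewrite -(prim_order_dvd pz).
set S := \sum_x _.
have : S = z ^+ m.+1 * S.
  rewrite {1}/S (reindex_inj (mulfI z0)) /= mulr_sumr; apply: eq_bigr => x _.
  by rewrite exprMn.
move=> /eqP; rewrite -subr_eq0 -{1}(mul1r S) -mulrBl mulf_eq0 subr_eq0 eq_sym.
by rewrite (negbTE zm) /= => /eqP.
Qed.
End FF.

Section Vec.
Variables (F : finFieldType) (n : nat).
Local Notation V := {ffun 'I_n.+1 -> F}.

Definition fnz (v : V) (i : 'I_n.+1) : bool :=
  (v i != 0) && [forall j : 'I_n.+1, (j < i)%N ==> (v j == 0)].

Lemma fnz_uniq v i j : fnz v i -> fnz v j -> i = j.
Proof.
move=> /andP[vi /forallP hi] /andP[vj /forallP hj]; apply/val_inj.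
case: (ltngtP i j) => // ij.
- by move: (hj i); rewrite ij /= (negbTE vi).
- by move: (hi j); rewrite ij /= (negbTE vj).
Qed.

Lemma fnz_exists v : v != 0 -> exists i, fnz v i.
Proof.
move=> v0.
case: (pickP (fun i => v i != 0)) => [i0 vi0 | h]; last first.
  case/eqP: v0; apply/ffunP => i; rewrite ffunE; move: (h i) => /negbFE/eqP //.
case: (@arg_minnP _ i0 (fun i => v i != 0) (fun i : 'I_n.+1 => nat_of_ord i) vi0) => i vi imin.
exists i; rewrite /fnz vi /=; apply/forallP => j; apply/implyP => ji.
apply/negPn/negP => vj; have := imin j vj; lia.
Qed.

Definition lead (v : V) : F := if [pick i | fnz v i] is Some i then v i else 1.
Definition nrm (v : V) : V := [ffun i => v i / lead v].
Definition phi (p : F * V) : V := [ffun i => p.1 * p.2 i].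
Definition psi (v : V) : F * V := (lead v, nrm v).

Lemma lead_ne0 v : lead v != 0.
Proof. by rewrite /lead; case: pickP => [i /andP[]|] //; rewrite oner_eq0. Qed.

Lemma phi_psi v : phi (psi v) = v.
Proof. by apply/ffunP => i; rewrite !ffunE /= mulrC divfK // lead_ne0. Qed.

Lemma psi_phi (c : F) (v : V) : c != 0 -> normalized v -> psi (phi (c, v)) = (c, v).
Proof.
move=> c0 /existsP[i /andP[/eqP vi1 hi]].
have fi : fnz (phi (c, v)) i.
  rewrite /fnz !ffunE /= vi1 mulr1 c0 /=; apply/forallP => j; apply/implyP => ji.
  rewrite ffunE; move/forallP/(_ j)/implyP/(_ ji)/eqP: hi => -> /=; by rewrite mulr0.
have le : lead (phi (c, v)) = c.
  rewrite /lead; case: pickP => [j fj|/(_ i)]; last by rewrite fi.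
  by rewrite (fnz_uniq fj fi) ffunE /= vi1 mulr1.
rewrite /psi le; congr pair; apply/ffunP => j; by rewrite !ffunE /= le mulrAC divff // mul1r.
Qed.

Lemma normalized_nrm (v : V) : v != 0 -> normalized (nrm v).
Proof.
move=> v0; have [i fi] := fnz_exists v0.
have le : lead v = v i.
  rewrite /lead; case: pickP => [j fj|/(_ i)]; last by rewrite fi.
  by rewrite (fnz_uniq fj fi).
move: fi => /andP[vi /forallP hi].
apply/existsP; exists i; rewrite ffunE le divff //= eqxx /=.
apply/forallP => j; apply/implyP => ji; rewrite ffunE.
by move/implyP/(_ ji)/eqP: (hi j) => ->; rewrite mul0r.
Qed.

Lemma sum_nonzero (G : V -> F) :
  \sum_(v : V | v != 0) G v = \sum_(c : F | c != 0) \sum_(v : V | normalized v) G (phi (c, v)).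
Proof.
rewrite (reindex_onto phi psi) => [|v _]; last exact: phi_psi.
rewrite pair_big_dep /=; apply: eq_big => [[c v]|[c v] _] //=.
apply/idP/idP.
- move=> /andP[nz /eqP e].
  have e1 : lead (phi (c, v)) = c := congr1 fst e.
  have e2 : nrm (phi (c, v)) = v := congr1 snd e.
  by rewrite -e1 -[in normalized _]e2 lead_ne0 normalized_nrm.
- move=> /andP[c0 nv]; rewrite psi_phi // eqxx andbT.
  move: (nv) => /existsP[i /andP[/eqP vi _]].
  apply/eqP => h; have := congr1 (fun f : V => f i) h; rewrite !ffunE /= vi mulr1.
  by move/eqP; rewrite (negbTE c0).
Qed.

Lemma big_PPoint (G : V -> F) :
  \sum_(P : PPoint F n) G (val P) = \sum_(v : V | normalized v) G v.
Proof.
rewrite [RHS](reindex_omap (val : PPoint F n -> V) insub); last first.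
  by move=> v nv; rewrite insubT.
by apply: eq_bigl => -[v nv] /=; rewrite insubT ?nv /= eqxx.
Qed.

End Vec.

Section Mono.
Variables (F : finFieldType) (n : nat).
Local Notation V := {ffun 'I_n.+1 -> F}.

Definition mono (m : 'X_{1..n.+1}) (v : 'I_n.+1 -> F) : F := \prod_i v i ^+ m i.
Definition Ssum (m : 'X_{1..n.+1}) : F := \sum_(v : V | normalized v) mono m v.

Lemma monoZ m (c : F) (v : V) : mono m (phi (c, v)) = c ^+ mdeg m * mono m v.
Proof.
rewrite /mono; under eq_bigr do rewrite ffunE exprMn.
by rewrite big_split /= prodrXr mdegE.
Qed.

Lemma mono0 m : (0 < mdeg m)%N -> mono m (0 : V) = 0.
Proof.
move=> dm.
case: (pickP (fun i => 0 < m i)%N) => [i mi | h]; last first.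
  move: dm; rewrite mdegE big1 // => i _; move: (h i) => /negbT; lia.
by rewrite /mono (bigD1 i) //= ffunE expr0n gtn_eqF // mul0r.
Qed.

Lemma full_sum m : \sum_(v : V) mono m v = \prod_i \sum_(x : F) x ^+ m i.
Proof. by rewrite bigA_distr_bigA. Qed.

Lemma key m : (0 < mdeg m)%N -> (#|F|.-1 %| mdeg m)%N ->
  Ssum m = - \prod_i \sum_(x : F) x ^+ m i.
Proof.
move=> d0 dv.
rewrite -full_sum (bigD1 (0 : V)) //= mono0 // add0r sum_nonzero.
under eq_bigr => c _ do under eq_bigr => v _ do rewrite monoZ.
under eq_bigr do rewrite -mulr_sumr.
rewrite -mulr_suml.
have -> : \sum_(c : F | c != 0) c ^+ mdeg m = -1.
  have := psum F (mdeg m); rewrite (bigD1 0) //= expr0n gtn_eqF // add0r d0 dv /=.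
  by [].
by rewrite mulN1r opprK.
Qed.

Definition en : V := [ffun i => if i == ord_max then 1 else 0].
Definition sig (c : F) (v : V) : V := [ffun i => if i == ord_max then c * v i else v i].

Lemma sig_norm (c : F) (v : V) : c != 0 -> normalized v -> v != en ->
  normalized (sig c v) && (sig c v != en).
Proof.
move=> c0 /existsP[i /andP[/eqP vi /forallP hi]] ne.
have im : i != ord_max.
  apply: contraNneq ne => ie; apply/eqP/ffunP => j; rewrite ffunE.
  case: (eqVneq j ord_max) => [->|jm]; first by rewrite -ie vi.
  have jn : (j < i)%N by rewrite ie /=; move: (ltn_ord j) jm; rewrite -val_eqE /=; lia.
  by move: (hi j); rewrite jn /= => /eqP.
apply/andP; split.
  apply/existsP; exists i; rewrite ffunE (negbTE im) vi eqxx /=.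
  apply/forallP => j; apply/implyP => ji; rewrite ffunE.
  have jm : j != ord_max by rewrite -val_eqE /=; move: (ltn_ord i) ji; lia.
  by rewrite (negbTE jm); move: (hi j); rewrite ji.
apply/eqP => h; have := congr1 (fun f : V => f i) h; rewrite !ffunE (negbTE im) vi.
by move/eqP; rewrite oner_eq0.
Qed.

Lemma sigK (c : F) : c != 0 -> cancel (sig c) (sig c^-1).
Proof.
move=> c0 v; apply/ffunP => i; rewrite !ffunE.
by case: (i == ord_max) => //; rewrite mulKf.
Qed.

Lemma Sspecial d : ~~ (#|F|.-1 %| d)%N ->
  \sum_(v : V | normalized v) v ord_max ^+ d = 1.
Proof.
move=> nd.
have nen : normalized en.
  apply/existsP; exists ord_max; rewrite ffunE eqxx eqxx /=.
  apply/forallP => j; apply/implyP => jm; rewrite ffunE.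
  by have -> : (j == ord_max) = false by rewrite -val_eqE /=; move: jm; lia.
rewrite (bigD1 en) //= ffunE eqxx expr1n.
suff -> : \sum_(v : V | normalized v && (v != en)) v ord_max ^+ d = 0 by rewrite addr0.
have [z pz] := prim_exists F.
have z0 : z != 0 by rewrite (prim_root_eq0 pz); have := cardF_gt1 F; lia.
have zm : z ^+ d != 1 by rewrite -(prim_order_dvd pz).
set T := \sum_(v | _) _.
have : T = z ^+ d * T.
  rewrite {1}/T (reindex_inj (can_inj (sigK z0))) /= mulr_sumr.
  apply: eq_big => v.
    apply/idP/idP => /andP[h1 h2].
      by have := sig_norm (invr_neq0 z0) h1 h2; rewrite sigK.
    exact: sig_norm.
  by rewrite ffunE eqxx exprMn.
move=> /eqP; rewrite -subr_eq0 -{1}(mul1r T) -mulrBl mulf_eq0 subr_eq0 eq_sym.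
by rewrite (negbTE zm) /= => /eqP.
Qed.

End Mono.

Lemma msplit (N : nat) (a : 'X_{1..N}) d : (d <= mdeg a)%N ->
  exists b : 'X_{1..N}, (b <= a)%MM /\ mdeg b = d.
Proof.
elim: d => [|d IH] hd.
  by exists 0%MM; split; [apply/mnm_lepP => i; rewrite mnm0E | exact: mdeg0].
have [b [ba bd]] := IH (ltnW hd).
case: (pickP (fun i => b i < a i)%N) => [i bi | h]; last first.
  have : (mdeg a <= mdeg b)%N.
    by rewrite !mdegE; apply: leq_sum => i _; move: (h i) => /negbT; lia.
  lia.
exists (b + U_(i))%MM; split; last by rewrite mdegD mdeg1 bd addn1.
apply/mnm_lepP => j; rewrite mnmDE mnm1E; move/mnm_lepP: ba => /(_ j).
case: (eqVneq i j) => [<-|] /=; lia.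
Qed.

Unset Implicit Arguments.

Theorem mainTheorem5 (F : finFieldType) (n k : nat) :
  (1 <= n)%N -> (1 <= k)%N -> (k <= n * (#|F| - 1))%N ->
  (self_orthogonal (@PRM F n k) <->
     ((1 <= k)%N /\ (2 * k <= n * (#|F| - 1))%N /\ (#|F| - 1 %| 2 * k)%N))
  /\ (self_orthogonal (@PRM F n k) ->
        forall w, hull (@PRM F n k) w <-> @PRM F n k w).
Proof.
move=> n1 k1 kle.
split; last first.
  move=> SO w; split => [[]//|Cw]; split => //; exact: SO.
have eP : (#|F| - 1 = #|F|.-1)%N by rewrite subn1.
rewrite eP in kle *.
have e0 : (0 < #|F|.-1)%N by have := cardF_gt1 F; lia.
have dotE : forall f g : {mpoly F[n.+1]}, dotp (evalvec f) (evalvec g) =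
    \sum_(v : {ffun 'I_n.+1 -> F} | normalized v) f.@[v] * g.@[v].
  move=> f g; rewrite /dotp; under eq_bigr do rewrite !mxE.
  rewrite /pt -(big_PPoint (fun v : {ffun 'I_n.+1 -> F} => f.@[v] * g.@[v])).
  by rewrite -(big_enum_val (fun P : PPoint F n => f.@[val P] * g.@[val P])).
split.
- move=> SO.
  have H : forall b c : 'X_{1..n.+1}, mdeg b = k -> mdeg c = k -> Ssum F (b + c)%MM = 0.
    move=> b c hb hc.
    have := SO (evalvec 'X_[c]) (ex_intro _ 'X_[c] (conj _ erefl))
                (evalvec 'X_[b]) (ex_intro _ 'X_[b] (conj _ erefl)).
    rewrite !dhomogX => /(_ (introT eqP hc) (introT eqP hb)).
    rewrite dotE; under eq_bigr do rewrite -mevalM -mpolyXD mevalX.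
    by [].
  have dv : (#|F|.-1 %| 2 * k)%N.
    apply/negPn/negP => nd.
    pose b := [multinom (if i == ord_max then k else 0%N) | i < n.+1].
    have hb : mdeg b = k.
      rewrite mdegE (bigD1 ord_max) //= mnmE eqxx big1 ?addn0 // => i im.
      by rewrite mnmE (negbTE im).
    have mb : forall v : {ffun 'I_n.+1 -> F}, mono (b + b)%MM v = v ord_max ^+ (2 * k).
      move=> v; rewrite /mono (bigD1 ord_max) //= big1 ?mulr1 => [|i im]; last first.
        by rewrite mnmDE !mnmE (negbTE im).
      by rewrite mnmDE !mnmE eqxx addnn -mul2n.
    have := H b b hb hb; rewrite /Ssum (eq_bigr _ (fun v _ => mb v)) Sspecial //.
    by move/eqP; rewrite oner_eq0.
  split => //; split => //.
  rewrite leqNgt; apply/negP => big.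
  set e := #|F|.-1 in e0 kle dv H big *.
  pose a := [multinom (if i == ord_max then 2 * k - n * e else e)%N | i < n.+1].
  have ha : mdeg a = (2 * k)%N.
    rewrite mdegE big_ord_recr /= mnmE eqxx.
    rewrite (eq_bigr (fun _ => e)) => [|i _]; last first.
      rewrite mnmE; have -> : (widen_ord (leqnSn n) i == ord_max) = false.
        by rewrite -val_eqE /= ltn_eqF.
      by [].
    rewrite sum_nat_const card_ord; lia.
  have [b [ba bd]] := @msplit _ a k ltac:(lia).
  have hc : mdeg (a - b)%MM = k.
    have := congr1 mdeg (submK ba); rewrite mdegD bd ha; lia.
  have := H b (a - b)%MM bd hc; rewrite addmC submK //.
  rewrite key ?ha //; last by lia.
  move/eqP; rewrite oppr_eq0; apply/negP/prodf_neq0 => i _.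
  rewrite psum mnmE.
  case: (i == ord_max) => /=.
    rewrite ifT ?oppr_eq0 ?oner_eq0 //; apply/andP; split; first by lia.
    by apply: dvdn_sub => //; apply: dvdn_mull.
  by rewrite e0 dvdnn /= oppr_eq0 oner_eq0.
- move=> [_ [k2 dv]] w [g [hg ->]] c [f [hf ->]].
  rewrite dotE; under eq_bigr do rewrite -mevalM mevalE.
  rewrite exchange_big /=; apply: big1_seq => m /andP[_ mm].
  rewrite -mulr_sumr.
  have md : mdeg m = (k + k)%N by move/dhomogP: (dhomogM hf hg) => /(_ m mm).
  suff : Ssum F m = 0 by rewrite /Ssum /mono => ->; rewrite mulr0.
  rewrite key; last 2 first.
  + by rewrite md; lia.
  + by rewrite md addnn -mul2n.
  case: (pickP (fun i => ~~ ((0 < m i)%N && (#|F|.-1 %| m i)%N))) => [i hi | h].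
    by rewrite (bigD1 i) //= psum (negbTE hi) mul0r oppr0.
  exfalso.
  have : (n.+1 * #|F|.-1 <= mdeg m)%N.
    rewrite mdegE (_ : (n.+1 * _ = \sum_(i < n.+1) #|F|.-1)%N); last by rewrite sum_nat_const card_ord.
    apply: leq_sum => i _.
    by move: (h i) => /negbFE/andP[p d]; apply: dvdn_leq.
  rewrite md; nia.
Qed.
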